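(* Every stick graph is a grounded L-graph. Moreover, if $G$ is a stick graph with a stick representation in which the vertices of $A$ are vertical segments and the vertices of $B$ are horizontal segments, then $G$ has a grounded L-representation that is nice with respect to the bipartition $(A,B)$.
   Context: An L-shape is the union of a vertical segment and a horizontal segment such that the bottom end-point of the vertical segment coincides with the left end-point of the horizontal segment; the top end-point of the vertical segment is its anchor. A grounded L-representation of a graph assigns an L-shape to each vertex, all anchors lying on a common horizontal line, so that two vertices are adjacent iff their L-shapes intersect; a graph having one is a grounded L-graph. A stick graph is a bipartite graph $G=(A\cup B,E)$ that is the intersection graph of a set of vertical segments (representing $A$) and a set of horizontal segments (representing $B$) such that the bottom end-points of the vertical segments and the left end-points of the horizontal segments all lie on a common straight line of slope $-1$; this is a stick representation. For a bipartite graph $G=(A\cup B,E)$, a grounded L-representation is nice (with respect to $(A,B)$) if every L-shape representing a vertex of $A$ meets other L-shapes only on its horizontal segment, and every L-shape representing a vertex of $B$ meets other L-shapes only on its vertical segment. *)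

(* Defs.v *)
From HB Require Import structures.
From mathcomp Require Import all_boot all_order all_algebra.
From mathcomp Require Import reals.
Set Implicit Arguments. Unset Strict Implicit. Unset Printing Implicit Defensive.
Import Order.TTheory GRing.Theory Num.Theory.
Local Open Scope ring_scope.

Section Geometry.
Variable R : realType.
Definition point := (R * R)%type.

Definition vseg (p : point) (h : R) (q : point) : Prop :=
  q.1 = p.1 /\ p.2 <= q.2 <= p.2 + h.
Definition hseg (p : point) (w : R) (q : point) : Prop :=
  q.2 = p.2 /\ p.1 <= q.1 <= p.1 + w.

Definition meets (S1 S2 : point -> Prop) : Prop := exists q, S1 q /\ S2 q.

(* L-shape with anchor (top end-point of the vertical part) a, vertical
   length h and horizontal length w: corner = (a.1, a.2 - h). *)
Definition corner (a : point) (h : R) : point := (a.1, a.2 - h).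
Definition Lvert (a : point) (h : R) := vseg (corner a h) h.
Definition Lhor (a : point) (h w : R) := hseg (corner a h) w.
Definition Lshape (a : point) (h w : R) (q : point) : Prop :=
  Lvert a h q \/ Lhor a h w q.
End Geometry.

Section Graphs.
Variables (R : realType) (T : finType).

Definition simple_graph (adj : rel T) : Prop :=
  symmetric adj /\ irreflexive adj.

Definition bipartite_wrt (adj : rel T) (A : {set T}) : Prop :=
  forall u v, adj u v -> (u \in A) != (v \in A).

(* A stick representation of adj where the vertices of A are vertical
   segments and the vertices of B = ~: A are horizontal segments:
   p v is the bottom (resp. left) end-point, l v > 0 the length. *)
Definition stick_shape (A : {set T}) (p : T -> point R) (l : T -> R) (v : T) :=
  if v \in A then vseg (p v) (l v) else hseg (p v) (l v).

Definition stick_rep (adj : rel T) (A : {set T})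
    (p : T -> point R) (l : T -> R) : Prop :=
  [/\ forall v, 0 < l v,
      exists c : R, forall v, (p v).1 + (p v).2 = c &
      forall u v, u != v ->
        (adj u v <-> meets (stick_shape A p l u) (stick_shape A p l v))].

Definition stick_graph (adj : rel T) : Prop :=
  exists A : {set T}, bipartite_wrt adj A /\
    exists p l, stick_rep adj A p l.

Definition grounded_L_rep (adj : rel T)
    (a : T -> point R) (h w : T -> R) : Prop :=
  [/\ forall v, 0 < h v /\ 0 < w v,
      exists y0 : R, forall v, (a v).2 = y0 &
      forall u v, u != v ->
        (adj u v <-> meets (Lshape (a u) (h u) (w u)) (Lshape (a v) (h v) (w v)))].

Definition grounded_L_graph (adj : rel T) : Prop :=
  exists a h w, grounded_L_rep adj a h w.

Definition nice_wrt (A : {set T}) (a : T -> point R) (h w : T -> R) : Prop :=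
  forall u v, u != v -> forall q,
    Lshape (a u) (h u) (w u) q -> Lshape (a v) (h v) (w v) q ->
    if u \in A then Lhor (a u) (h u) (w u) q else Lvert (a u) (h u) q.
End Graphs.

(* Main.v *)
Require Import Defs.
From HB Require Import structures.
From mathcomp Require Import all_boot all_order all_algebra.
From mathcomp Require Import reals.
From mathcomp Require Import lra.
Set Implicit Arguments. Unset Strict Implicit. Unset Printing Implicit Defensive.
Import Order.TTheory GRing.Theory Num.Theory.
Local Open Scope ring_scope.

Lemma L_meet (R : realType) (x1 x2 y0 h1 h2 w1 w2 : R) :
  0 < h1 -> 0 < h2 -> 0 < w1 -> 0 < w2 -> x1 < x2 ->
  meets (Lshape (x1, y0) h1 w1) (Lshape (x2, y0) h2 w2) <-> (h1 <= h2 /\ x2 <= x1 + w1).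
Proof.
move=> H1 H2 W1 W2 X; split.
- move=> [[qx qy]] [[[/= E1 /andP[A1 B1]]|[/= E1 /andP[A1 B1]]] [[/= E2 /andP[A2 B2]]|[/= E2 /andP[A2 B2]]]];
  split; lra.
- move=> [Hh Hx]; exists (x2, y0 - h1); split.
  + by right; rewrite /Lhor /hseg /=; split => //; apply/andP; split; lra.
  + by left; rewrite /Lvert /vseg /=; split => //; apply/andP; split; lra.
Qed.

Lemma L_nice (R : realType) (x1 x2 y0 h1 h2 w1 w2 : R) q :
  0 < h1 -> 0 < h2 -> 0 < w1 -> 0 < w2 -> x1 < x2 -> h1 < h2 ->
  Lshape (x1, y0) h1 w1 q -> Lshape (x2, y0) h2 w2 q ->
  Lhor (x1, y0) h1 w1 q /\ Lvert (x2, y0) h2 q.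
Proof.
move=> H1 H2 W1 W2 X Hh [[/= E1 /andP[A1 B1]]|[/= E1 /andP[A1 B1]]] [[/= E2 /andP[A2 B2]]|[/= E2 /andP[A2 B2]]]; try lra.
split; [rewrite /Lhor /hseg /=; split => //; apply/andP; split; lra|].
by rewrite /Lvert /vseg /=; split => //; apply/andP; split; lra.
Qed.

Lemma stick_meet (R : realType) (P1 P2 : point R) l1 l2 :
  meets (vseg P1 l1) (hseg P2 l2) <->
  (P2.1 <= P1.1 <= P2.1 + l2 /\ P1.2 <= P2.2 <= P1.2 + l1).
Proof.
split.
- move=> [q [[E1 /andP[A1 B1]] [E2 /andP[A2 B2]]]]; split; apply/andP; split; lra.
- move=> [/andP[A1 B1] /andP[A2 B2]]; exists (P1.1, P2.2); split; split => //=; apply/andP; split; lra.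
Qed.

Lemma meets_sym (R : realType) (S1 S2 : point R -> Prop) : meets S1 S2 <-> meets S2 S1.
Proof. by split; move=> [q [? ?]]; exists q. Qed.

Definition G (R : realType) (x y e : R) := (y <= x + e -> y <= x) /\ (y <= x -> y < x + e).

Lemma small_G (R : realType) (x y : R) : exists d : R, 0 < d /\ forall e, 0 < e <= d -> G x y e.
Proof.
case: (lerP y x) => Hyx.
- exists 1; split => // e /andP[E1 E2]; split => _; lra.
- exists ((y - x) / 2); split; first lra.
  move=> e /andP[E1 E2]; split => H; lra.
Qed.

Lemma fin_small (R : realType) (I : finType) (P : I -> R -> Prop) :
  (forall i, exists d : R, 0 < d /\ forall e, 0 < e <= d -> P i e) ->
  exists d : R, 0 < d /\ forall i e, 0 < e <= d -> P i e.
Proof.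
move=> H.
suff [d [d0 Hd]] : exists d : R, 0 < d /\ forall i, i \in enum I -> forall e, 0 < e <= d -> P i e.
  by exists d; split => // i e; apply: Hd; rewrite mem_enum.
elim: (enum I) => [|i0 s [d2 [d20 IH]]]; first by exists 1; split.
have [d1 [d10 H1]] := H i0.
exists (if d1 <= d2 then d1 else d2); split; first by case: ifP.
move=> i; rewrite in_cons => /orP[/eqP->|Hi] e /andP[E1 E2].
- apply: H1; apply/andP; split => //; case: ifP E2 => D E2; lra.
- apply: IH => //; apply/andP; split => //; case: ifP E2 => D E2; lra.
Qed.

Lemma le_sum_abs (R : realType) (T : finType) (t : T -> R) v : `|t v| <= \sum_(u : T) `|t u|.
Proof.
rewrite (bigD1 v) //=; rewrite lerDl; apply: sumr_ge0 => *; exact: normr_ge0.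
Qed.

Lemma norm_bound (R : realType) (T : finType) (t : T -> R) v : - t v <= \sum_(u : T) `|t u|.
Proof. apply: le_trans (le_sum_abs t v); rewrite -normrN; exact: ler_norm. Qed.

Lemma part2 (R : realType) (T : finType) (adj : rel T) :
  simple_graph adj ->
  (forall (A : {set T}) (p : T -> point R) (l : T -> R),
      bipartite_wrt adj A -> stick_rep adj A p l ->
      exists (a : T -> point R) (h w : T -> R),
        grounded_L_rep adj a h w /\ nice_wrt A a h w).
Proof.
move=> [Hsym Hirr] A p l Hbip [Hl [c Hc] Hrep].
pose t v := (p v).1.
have Hp2 : forall v, (p v).2 = c - t v by move=> v; rewrite -(Hc v) /t; lra.
have [e [e0 He]] : exists e : R, 0 < e /\ forall (i : T * T * bool) e', 0 < e' <= e ->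
   if i.2 then G (t i.1.1) (t i.1.2) e' else G (t i.1.2 + l i.1.2) (t i.1.1) e'.
  by apply: fin_small => -[[u v] []]; apply: small_G.
have ee : 0 < e <= e by rewrite e0 lexx.
have G1 : forall u v, G (t u) (t v) e by move=> u v; exact: (He (u, v, true) e ee).
have G2 : forall u v, G (t v + l v) (t u) e by move=> u v; exact: (He (u, v, false) e ee).
pose K := 1 + \sum_(u : T) `|t u|.
have HK : forall v, 0 < t v + K by move=> v; have := norm_bound t v; rewrite /K; lra.
pose x v := if v \in A then - t v - e else - t v.
pose a v := (x v, 0 : R).
pose h v := if v \in A then t v + K else t v + l v + K + e.
pose w v := if v \in A then l v + e else e.
have hpos : forall v, 0 < h v by move=> v; rewrite /h; case: ifP => _; have := HK v; have := Hl v; lra.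
have wpos : forall v, 0 < w v by move=> v; rewrite /w; case: ifP => _; have := Hl v; lra.
pose nc v q := if v \in A then Lhor (a v) (h v) (w v) q else Lvert (a v) (h v) q.
have notadj : forall u v, (u \in A) = (v \in A) -> ~ adj u v.
  by move=> u v E /Hbip; rewrite E eqxx.
have key : forall u v, u != v -> x u < x v ->
  (adj u v <-> meets (Lshape (a u) (h u) (w u)) (Lshape (a v) (h v) (w v))) /\
  (forall q, Lshape (a u) (h u) (w u) q -> Lshape (a v) (h v) (w v) q -> nc u q /\ nc v q).
  move=> u v Huv Hx.
  have M := L_meet 0 (hpos u) (hpos v) (wpos u) (wpos v) Hx.
  have N := L_nice (y0:=0) (hpos u) (hpos v) (wpos u) (wpos v) Hx.
  have S := Hrep u v Huv.
  rewrite /nc /a.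
  have [G1a G1b] := G1 u v. have [G1a' G1b'] := G1 v u.
  have [G2a G2b] := G2 u v.
  have Lu := Hl u; have Lv := Hl v.
  move: M N S Hx; rewrite /stick_shape /x /h /w.
  case Au: (u \in A); case Av: (v \in A) => M N S Hx.
  - have NA := notadj u v (etrans Au (esym Av)).
    split; first by split => // /M [? ?]; lra.
    move=> q Q1 Q2; have MM := ex_intro (fun q => _ q /\ _ q) q (conj Q1 Q2); move: MM.
    by move=> /M [? ?]; lra.
  - have tle : t v <= t u by apply: G1a; lra.
    split.
      split.
      + move/S/stick_meet; rewrite !Hp2 -/(t u) -/(t v) => [[/andP[? ?] /andP[? ?]]].
        apply/M; split; [have := G2b; lra|lra].
      + move/M => [M1 M2]; apply/S/stick_meet; rewrite !Hp2 -/(t u) -/(t v).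
        have := G2a; split; apply/andP; split; lra.
    move=> q Q1 Q2; have MM := ex_intro (fun q => _ q /\ _ q) q (conj Q1 Q2); move: MM.
    move=> /M [M1 M2].
    apply: N => //; have := G2b; have := G2a; lra.
  - have tlt : t v + e < t u by lra.
    have NA : ~ adj u v.
      move/S/meets_sym/stick_meet; rewrite !Hp2 -/(t u) -/(t v) => [[/andP[? ?] /andP[? ?]]]; lra.
    split; first by split => // /M [? ?]; lra.
    move=> q Q1 Q2; have MM := ex_intro (fun q => _ q /\ _ q) q (conj Q1 Q2); move: MM.
    by move=> /M [? ?]; lra.
  - have NA := notadj u v (etrans Au (esym Av)).
    have F : ~ (- t v <= - t u + e) by move=> H; have := G1a'; lra.
    split; first by split => // /M [? ?]; lra.
    move=> q Q1 Q2; have MM := ex_intro (fun q => _ q /\ _ q) q (conj Q1 Q2); move: MM.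
    by move=> /M [? ?]; lra.
have xneq : forall u v, u != v -> x u != x v.
  move=> u v Huv; apply/eqP => E; move: E; rewrite /x.
  have [G1a _] := G1 u v; have [G1a' _] := G1 v u.
  have S := Hrep u v Huv; move: S; rewrite /stick_shape.
  case Au: (u \in A); case Av: (v \in A) => S E.
  - apply: (notadj u v (etrans Au (esym Av))); apply/S; exists (p u).
    split; split; rewrite ?Hp2 -/(t u) -/(t v); try lra; apply/andP; split; have := Hl u; have := Hl v; lra.
  - have : t v <= t u by apply: G1a; lra.
    lra.
  - have : t u <= t v by apply: G1a'; lra.
    lra.
  - apply: (notadj u v (etrans Au (esym Av))); apply/S; exists (p u).
    split; split; rewrite ?Hp2 -/(t u) -/(t v); try lra; apply/andP; split; have := Hl u; have := Hl v; lra.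
have key2 : forall u v, u != v ->
  (adj u v <-> meets (Lshape (a u) (h u) (w u)) (Lshape (a v) (h v) (w v))) /\ (forall q, Lshape (a u) (h u) (w u) q -> Lshape (a v) (h v) (w v) q -> nc u q /\ nc v q).
  move=> u v Huv; case/orP: (lt_total (xneq u v Huv)) => Hx; first exact: key.
  have Hvu : v != u by rewrite eq_sym.
  have [K1 K2] := key v u Hvu Hx; split.
  - rewrite Hsym; split => [/K1/meets_sym|/meets_sym/K1] //.
  - move=> q Q1 Q2; have [] := K2 q Q2 Q1; by split.
exists a, h, w; split.
- split.
  + by move=> v; split; [exact: hpos|exact: wpos].
  + by exists 0.
  + by move=> u v Huv; have [] := key2 u v Huv.
- move=> u v Huv q Q1 Q2; have [_ K2] := key2 u v Huv; by have [] := K2 q Q1 Q2.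
Qed.

Theorem proposition1 (R : realType) (T : finType) (adj : rel T) :
  simple_graph adj ->
  (stick_graph R adj -> grounded_L_graph R adj) /\
  (forall (A : {set T}) (p : T -> point R) (l : T -> R),
      bipartite_wrt adj A -> stick_rep adj A p l ->
      exists (a : T -> point R) (h w : T -> R),
        grounded_L_rep adj a h w /\ nice_wrt A a h w).
Proof.
move=> Hs; split; last exact: part2.
move=> [A [Hb [p [l Hr]]]].
have [a [h [w [H _]]]] := part2 Hs Hb Hr.
by exists a, h, w.
Qed.
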